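(* Let $\mathcal{X}$ be an input alphabet, $\mathcal{Z}$ an output alphabet, $q(\cdot\mid\cdot)$ an $\varepsilon$-LDP mechanism from $\mathcal{X}$ to $\mathcal{Z}$, $p$ any reference distribution on $\mathcal{Z}$, and $N\ge1$ any number of candidates. Then the MRC index distribution $\pi^{\mathrm{mrc}}$ is a $2\varepsilon$-LDP mechanism, i.e. for all $\mathbf{x},\mathbf{x}'\in\mathcal{X}$, all candidate tuples $(\mathbf{z}_1,\dots,\mathbf{z}_N)\in\mathcal{Z}^N$ and all $k\in[N]$, $\pi^{\mathrm{mrc}}_{\mathbf{x}}(k)\le e^{2\varepsilon}\pi^{\mathrm{mrc}}_{\mathbf{x}'}(k)$.
   Context: A mechanism $q$ maps $\mathbf{x}\in\mathcal{X}$ to a random $\mathbf{z}\in\mathcal{Z}$ with conditional density (or pmf) $q(\mathbf{z}\mid\mathbf{x})$; it is $\varepsilon$-LDP if $q(\mathbf{z}\mid\mathbf{x})\le e^{\varepsilon}q(\mathbf{z}\mid\mathbf{x}')$ for all $\mathbf{x},\mathbf{x}',\mathbf{z}$. When a mechanism also depends on shared randomness $\mathbf{u}$ (known to user and server, independent of $\mathbf{x}$), the $\varepsilon$-LDP requirement is that the inequality holds for every fixed value of $\mathbf{u}$. Minimal Random Coding (MRC): draw candidates $\mathbf{z}_1,\dots,\mathbf{z}_N$ i.i.d. from $p$ (the shared randomness), set $w(k)=q(\mathbf{z}_k\mid\mathbf{x})/p(\mathbf{z}_k)$ and $\pi^{\mathrm{mrc}}_{\mathbf{x}}(k)=w(k)/\sum_{k'=1}^N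 w(k')$ for $k\in[N]$; the mechanism outputs the index $K\sim\pi^{\mathrm{mrc}}_{\mathbf{x}}$. *)

(* Defs.v *)
From mathcomp Require Import all_boot all_order all_algebra.
From mathcomp Require Import reals.
From mathcomp Require Import sequences exp.
Set Implicit Arguments. Unset Strict Implicit. Unset Printing Implicit Defensive.
Import Order.TTheory GRing.Theory Num.Theory.
Local Open Scope ring_scope.

(* A mechanism is given by its conditional density / pmf  q x z = q(z | x). *)
Definition is_mechanism (R : realType) (X Z : Type) (q : X -> Z -> R) : Prop :=
  forall x z, 0 <= q x z.

Definition is_LDP (R : realType) (X Z : Type) (eps : R) (q : X -> Z -> R) : Prop :=
  forall x x' z, q x z <= expR eps * q x' z.

Definition mrc_weight (R : realType) (X Z : Type) (q : X -> Z -> R) (p : Z -> R)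
  (N : nat) (x : X) (zs : 'I_N -> Z) (k : 'I_N) : R :=
  q x (zs k) / p (zs k).

Definition pi_mrc (R : realType) (X Z : Type) (q : X -> Z -> R) (p : Z -> R)
  (N : nat) (x : X) (zs : 'I_N -> Z) (k : 'I_N) : R :=
  mrc_weight q p x zs k / \sum_(k' < N) mrc_weight q p x zs k'.

(* Main.v *)
Require Import Defs.
From mathcomp Require Import all_boot all_order all_algebra.
From mathcomp Require Import reals.
From mathcomp Require Import sequences exp.
From mathcomp Require Import ring.
Import Order.TTheory GRing.Theory Num.Theory.
Local Open Scope ring_scope.

Theorem theorem2 (R : realType) (X Z : Type) (eps : R)
  (q : X -> Z -> R) (p : Z -> R) (N : nat)
  (hq : is_mechanism q) (hldp : is_LDP eps q)
  (hp : forall z, 0 <= p z)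
  (hN : (1 <= N)%N)
  (x x' : X) (zs : 'I_N -> Z) (hzs : forall k, 0 < p (zs k)) (k : 'I_N) :
  pi_mrc q p x zs k <= expR (2 * eps) * pi_mrc q p x' zs k.
Proof.
rewrite /pi_mrc.
set w := mrc_weight q p x zs; set w' := mrc_weight q p x' zs.
have w0 : forall i, 0 <= w i by move=> i; rewrite /w /mrc_weight divr_ge0 // ltW.
have w'0 : forall i, 0 <= w' i by move=> i; rewrite /w' /mrc_weight divr_ge0 // ltW.
have wle : forall y y' i, mrc_weight q p y zs i <= expR eps * mrc_weight q p y' zs i.
  by move=> y y' i; rewrite /mrc_weight mulrA ler_wpM2r // invr_ge0 ltW.
set S := \sum_(i < N) w i; set S' := \sum_(i < N) w' i.
have S0 : 0 <= S by apply: sumr_ge0.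
have S'0 : 0 <= S' by apply: sumr_ge0.
have SS : S' <= expR eps * S.
  rewrite /S /S' mulr_sumr; apply: ler_sum => i _; exact: wle.
have wk : w k <= expR eps * w' k by exact: wle.
have wkS : w' k <= S'.
  by rewrite /S' (bigD1 k) //= lerDl sumr_ge0.
have e2 : expR (2 * eps) = expR eps * expR eps by rewrite mulr2n mulrDl mul1r expRD.
have ep := expR_gt0 eps.
have rhs0 : 0 <= expR (2 * eps) * (w' k / S') by rewrite mulr_ge0 ?divr_ge0 // ltW ?expR_gt0.
case: (eqVneq S 0) => [->|Sn0]; first by rewrite invr0 mulr0.
have Sp : 0 < S by rewrite lt0r Sn0.
case: (eqVneq S' 0) => [S'z|S'n0].
  have wk0 : w' k = 0 by apply/eqP; rewrite eq_le w'0 andbT -S'z.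
  rewrite wk0 mulr0 in wk; have -> : w k = 0 by apply/eqP; rewrite eq_le w0 andbT.
  by rewrite mul0r.
have S'p : 0 < S' by rewrite lt0r S'n0.
have key : w' k <= expR eps * (w' k / S' * S).
  have -> : expR eps * (w' k / S' * S) = w' k * (expR eps * S / S') by ring.
  rewrite -[X in X <= _]mulr1 ler_wpM2l // ler_pdivlMr // mul1r //.
rewrite ler_pdivrMr // e2 -mulrA; apply: (le_trans wk).
have -> : expR eps * (expR eps * (w' k / S')) * S = expR eps * (expR eps * (w' k / S' * S)) by ring.
by rewrite ler_pM2l.
Qed.
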